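(* For every $A\subset\Omega$, $$\overline{F_A}=\{\phi\in\mathcal H:\phi_\pi\in\overline{F_A\cap\mathcal H_\pi}\}=\overline{F_A\cap\mathcal H_\pi}\oplus\mathcal H_\pi^\perp,$$ $$F_A^\perp=(F_A\cap\mathcal H_\pi)^\perp\cap\mathcal H_\pi,$$ and $$\overline{F_A}\cap\mathcal H_\pi=\overline{F_A\cap\mathcal H_\pi}.$$
   Context: Let $\mathcal H$ be a complex Hilbert space; $\overline V$ is the closure of $V\subset\mathcal H$. A projection is a bounded self-adjoint idempotent operator; $\wedge_\alpha p_\alpha$ is the projection onto the intersection of ranges. Let $S$ be a set; for each $t\in S$ let $\Gamma(t)$ be a countable set and for $a\in\Gamma(t)$ let $p^t_a$ be a projection on $\mathcal H$ with $\sum_{a\in\Gamma(t)}p^t_a=I$ (strong convergence). Let $\pi=\{p^t_a\}$ and $p^{t_1,\dots,t_k}_{a_1,\dots,a_k}=\wedge_{i=1}^kp^{t_i}_{a_i}$. $\pi$ commutes on $\phi$ if $W\phi=V\phi$ whenever $W,V$ are finite products of elements of $\pi$ with the same factors (with multiplicity) in possibly different orders; $\mathcal H_\pi$ is the closed subspace of such $\phi$, $p_\pi$ its projection, $\phi_\pi=p_\pi\phi$. Let $\Omega=\prod_{t\in S}\Gamma(t)$. For $A\subset\Omega$, $F_A=\{\phi\in\mathcal H:$ for every $\omega\in A$ there are $t_1,\dots,t_k\in S$ with $p^{t_1,\dots,t_k}_{\omega_{t_1},\dots,\omega_{t_k}}\phi=0\}$ (a vector space). *)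

(* Defs.v *)
From HB Require Import structures.
From mathcomp Require Import all_boot all_order all_algebra.
From mathcomp Require Import reals complex.
From Stdlib Require List.
From Stdlib Require Import Permutation ClassicalEpsilon.

Set Implicit Arguments.
Unset Strict Implicit.
Unset Printing Implicit Defensive.

Import Order.TTheory GRing.Theory Num.Theory.
Local Open Scope ring_scope.

Section Hilbert.
Context (R : realType) (H : lmodType R[i]) (ip : H -> H -> R[i]).

Definition hnorm (x : H) : R := Num.sqrt (complex.Re (ip x x)).

Definition hilbert_space : Prop :=
  [/\ (forall (a : R[i]) (x y z : H), ip (a *: x + y) z = a * ip x z + ip y z),
      (forall x y : H, ip y x = conjc (ip x y)),
      (forall x : H, 0 <= ip x x),
      (forall x : H, ip x x = 0 -> x = 0) &
      (forall u : nat -> H,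
         (forall e : R, 0 < e -> exists N : nat, forall m n : nat,
              (N <= m)%N -> (N <= n)%N -> hnorm (u m - u n) < e) ->
         exists l : H, forall e : R, 0 < e -> exists N : nat, forall n : nat,
              (N <= n)%N -> hnorm (u n - l) < e)].

Definition hclosure (V : H -> Prop) : H -> Prop :=
  fun x => forall e : R, 0 < e -> exists v, V v /\ hnorm (x - v) < e.

Definition horth (V : H -> Prop) : H -> Prop :=
  fun x => forall v, V v -> ip x v = 0.

Definition capset (V W : H -> Prop) : H -> Prop := fun x => V x /\ W x.

Definition sumset (V W : H -> Prop) : H -> Prop :=
  fun x => exists v w, V v /\ W w /\ x = v + w.

Definition prange (P : H -> H) : H -> Prop := fun y => exists x, y = P x.

Definition is_projection (P : H -> H) : Prop :=
  [/\ (forall (a : R[i]) (x y : H), P (a *: x + y) = a *: P x + P y),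
      (exists M : R, forall x, hnorm (P x) <= M * hnorm x),
      (forall x y, ip (P x) y = ip x (P y)) &
      (forall x, P (P x) = P x)].

Definition proj_onto (M : H -> Prop) : H -> H :=
  epsilon (inhabits (fun x : H => x))
    (fun P => is_projection P /\ forall y, M y <-> prange P y).

Definition meet_proj (ps : list (H -> H)) : H -> H :=
  proj_onto (fun y => forall P, List.In P ps -> prange P y).

Context (S : Type) (Gamma : S -> countType) (p : forall t, Gamma t -> H -> H).

(* sum_{a in Gamma t} p^t_a = I, in the strong (unconditional) sense *)
Definition sums_to_identity (t : S) : Prop :=
  forall phi : H, forall e : R, 0 < e ->
    exists s0 : seq (Gamma t), forall s : seq (Gamma t),
      uniq s -> {subset s0 <= s} ->
      hnorm (phi - \sum_(a <- s) p a phi) < e.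

(* elements of pi are indexed by pairs (t, a) *)
Definition pidx := {t : S & Gamma t}.
Definition pop (i : pidx) : H -> H := p (projT2 i).

Definition prod_ops (l : list pidx) : H -> H :=
  foldr (fun i f => fun x => pop i (f x)) (fun x => x) l.

Definition commutes_on (phi : H) : Prop :=
  forall l1 l2 : list pidx, Permutation l1 l2 -> prod_ops l1 phi = prod_ops l2 phi.

Definition H_pi : H -> Prop := commutes_on.
Definition p_pi : H -> H := proj_onto H_pi.

Definition F_A (A : (forall t, Gamma t) -> Prop) : H -> Prop :=
  fun phi => forall omega, A omega ->
    exists ts : seq S, ts <> [::] /\
      meet_proj ([seq p (omega t) | t <- ts]) phi = 0.

End Hilbert.

(* Main.v *)
Require Import Defs.
From HB Require Import structures.
From mathcomp Require Import all_boot all_order all_algebra.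
From mathcomp Require Import reals complex.
From mathcomp Require Import classical_sets.
From mathcomp Require Import ring lra.
From Stdlib Require List.
From Stdlib Require Import Permutation ClassicalEpsilon Classical.
Import Order.TTheory GRing.Theory Num.Theory.
Local Open Scope ring_scope.
Local Open Scope complex_scope.

Set Implicit Arguments.
Unset Strict Implicit.
Unset Printing Implicit Defensive.

Local Notation RE := complex.Re.
Local Notation IM := complex.Im.



Definition ipax (R : realType) (H : lmodType R[i]) (ip : H -> H -> R[i]) :=
  [/\ (forall (a : R[i]) (x y z : H), ip (a *: x + y) z = a * ip x z + ip y z),
      (forall x y : H, ip y x = conjc (ip x y)),
      (forall x : H, 0 <= ip x x) &
      (forall x : H, ip x x = 0 -> x = 0)].

Section Basics.
Variables (R : realType) (H : lmodType R[i]) (ip : H -> H -> R[i]).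
Hypothesis hI : ipax ip.
Let ipL : forall (a : R[i]) (x y z : H), ip (a *: x + y) z = a * ip x z + ip y z.
Proof. by case: hI. Qed.
Let ipC : forall x y : H, ip y x = conjc (ip x y).
Proof. by case: hI. Qed.
Let ipP : forall x : H, 0 <= ip x x.
Proof. by case: hI. Qed.
Let ipD : forall x : H, ip x x = 0 -> x = 0.
Proof. by case: hI. Qed.

Lemma ip0l z : ip 0 z = 0.
Proof.
have := ipL 1 0 0 z; rewrite scaler0 addr0 mul1r => /eqP.
by rewrite -{1}[ip 0 z]addr0 eq_sym => /eqP /addrI.
Qed.

Lemma ipDl x y z : ip (x + y) z = ip x z + ip y z.
Proof. by have := ipL 1 x y z; rewrite scale1r mul1r. Qed.

Lemma ipZl a x z : ip (a *: x) z = a * ip x z.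
Proof. by have := ipL a x 0 z; rewrite addr0 ip0l addr0. Qed.

Lemma ipNl x z : ip (- x) z = - ip x z.
Proof. by rewrite -scaleN1r ipZl mulN1r. Qed.

Lemma ipBl x y z : ip (x - y) z = ip x z - ip y z.
Proof. by rewrite ipDl ipNl. Qed.

Lemma ip0r z : ip z 0 = 0.
Proof. by rewrite ipC ip0l conjc0. Qed.

Lemma ipDr x y z : ip z (x + y) = ip z x + ip z y.
Proof. by rewrite (ipC x z) (ipC y z) [LHS]ipC ipDl rmorphD. Qed.

Lemma ipZr a x z : ip z (a *: x) = conjc a * ip z x.
Proof. by rewrite (ipC x z) [LHS]ipC ipZl rmorphM. Qed.

Lemma ipNr x z : ip z (- x) = - ip z x.
Proof. by rewrite (ipC x z) [LHS]ipC ipNl rmorphN. Qed.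

Lemma ipBr x y z : ip z (x - y) = ip z x - ip z y.
Proof. by rewrite ipDr ipNr. Qed.

Definition N x : R := RE (ip x x).

Lemma ipNE x : ip x x = (N x)%:C.
Proof. have := ger0_Im (ipP x); rewrite /N; by case: (ip x x) => a b /= ->. Qed.

Lemma N_ge0 x : 0 <= N x.
Proof. by have := ipP x; rewrite ipNE ler0c. Qed.

Lemma N_eq0 x : N x = 0 -> x = 0.
Proof. by move=> h; apply: ipD; rewrite ipNE h. Qed.

Lemma N0 : N 0 = 0.
Proof. by rewrite /N ip0l. Qed.

Lemma NN x : N (- x) = N x.
Proof. by rewrite /N ipNl ipNr opprK. Qed.

Lemma cReD (a b : R[i]) : RE (a + b) = RE a + RE b.
Proof. by case: a; case: b. Qed.
Lemma cReN (a : R[i]) : RE (- a) = - RE a.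
Proof. by case: a. Qed.
Lemma cReJ (a : R[i]) : RE (conjc a) = RE a.
Proof. by case: a. Qed.
Lemma cReMr (s : R) (a : R[i]) : RE (s%:C * a) = s * RE a.
Proof. by case: a => x y /=; rewrite mul0r subr0. Qed.
Lemma cImJ (a : R[i]) : IM (conjc a) = - IM a.
Proof. by case: a. Qed.
Lemma cRe_real (s : R) : RE s%:C = s.
Proof. by []. Qed.
Lemma cRe_ii (a : R[i]) : RE (conjc 'i * a) = IM a.
Proof. by case: a => x y /=; lra. Qed.
Lemma cplx0 (a : R[i]) : RE a = 0 -> IM a = 0 -> a = 0.
Proof. by case: a => x y /= -> ->. Qed.
Lemma cnormJ (c : R[i]) : c * conjc c = ((RE c)^+2 + (IM c)^+2)%:C.
Proof. case: c => x y; rewrite /= /GRing.mul /= /real_complex_def; congr (_ +i* _); lra. Qed.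

Lemma NDE a b : N (a + b) = N a + 2 * RE (ip a b) + N b.
Proof.
rewrite /N ipDl !ipDr (ipC b a) !cReD cReJ; lra.
Qed.

Lemma NBE a b : N (a - b) = N a - 2 * RE (ip a b) + N b.
Proof. by rewrite NDE NN ipNr cReN; lra. Qed.

Lemma NZ c b : N (c *: b) = ((RE c)^+2 + (IM c)^+2) * N b.
Proof. by rewrite /N ipZl ipZr mulrA cnormJ ipNE -rmorphM. Qed.

Lemma NZr (s : R) b : N (s%:C *: b) = s ^+ 2 * N b.
Proof. by rewrite NZ /= expr0n /= addr0. Qed.

Lemma ReZl (s : R) a b : RE (ip (s%:C *: a) b) = s * RE (ip a b).
Proof. by rewrite ipZl cReMr. Qed.

Lemma N_par a b : N (a + b) + N (a - b) = 2 * N a + 2 * N b.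
Proof. rewrite NDE NBE; lra. Qed.

Lemma N_tri a b : N (a + b) <= 2 * N a + 2 * N b.
Proof. have := N_par a b; have := N_ge0 (a - b); lra. Qed.

Lemma CS_Re x y : (RE (ip x y)) ^+ 2 <= N x * N y.
Proof.
have [/N_eq0 ->|ny] := eqVneq (N y) 0.
  by rewrite ip0r N0 mulr0 /= expr0n.
have ny0 : 0 < N y by rewrite lt_def ny N_ge0.
set r := RE (ip x y).
set s := - r / N y.
have hs : s * N y = - r by rewrite /s mulfVK.
have := N_ge0 (x + s%:C *: y); rewrite NDE NZr ipZr conjc_real cReMr -/r.
have := N_ge0 x; nra.
Qed.

Lemma CS_Im x y : (IM (ip x y)) ^+ 2 <= N x * N y.
Proof.
have := CS_Re x ('i *: y); rewrite ipZr cRe_ii NZ /= expr0n /= expr1n add0r mul1r //.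
Qed.

Lemma le0_eps (a c : R) : 0 <= c -> (forall e, 0 < e -> a <= c * e) -> a <= 0.
Proof.
move=> c0 h; rewrite leNgt; have [a0|//] := boolP (0 < a).
have c1 : 0 < c + 1 by lra.
have e0 : 0 < a / (c + 1) by rewrite divr_gt0.
have := h _ e0; rewrite mulrA ler_pdivlMr // => H1.
exfalso; nra.
Qed.

Lemma small_ip x y : (forall e, 0 < e -> exists v, ip x v = 0 /\ N (y - v) < e) -> ip x y = 0.
Proof.
move=> h.
have key : forall f : R[i] -> R, (forall u w, (f (ip u w))^+2 <= N u * N w) -> f (ip x y) = 0.
  move=> f CS; apply/eqP; rewrite -sqrf_eq0 eq_le sqr_ge0 andbT.
  apply: (@le0_eps _ (N x)); first exact: N_ge0.
  move=> e e0; have [v [hv hN]] := h e e0.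
  have -> : ip x y = ip x (y - v) by rewrite ipBr hv subr0.
  apply: le_trans (CS _ _) _; apply: ler_wpM2l; [exact: N_ge0|exact: ltW].
by apply: cplx0; apply: key; [exact: CS_Re|exact: CS_Im].
Qed.

Definition subsp (M : H -> Prop) := M 0 /\ forall a x y, M x -> M y -> M (a *: x + y).
Definition closedS (M : H -> Prop) := forall x, hclosure ip M x -> M x.
Definition linT (T : H -> H) := forall a x y, T (a *: x + y) = a *: T x + T y.
Definition blin (T : H -> H) := linT T /\ exists B, forall x, N (T x) <= B * N x.

Lemma hnormE x : hnorm ip x = Num.sqrt (N x).
Proof. by []. Qed.

Lemma hnorm_lt x e : 0 < e -> (hnorm ip x < e) = (N x < e ^+ 2).
Proof.
move=> e0; rewrite hnormE -[e in LHS](@ger0_norm _ e) ?ltW // -sqrtr_sqr ltr_sqrt //.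
by rewrite exprn_gt0.
Qed.

Lemma clN M x : hclosure ip M x <-> (forall e, 0 < e -> exists v, M v /\ N (x - v) < e).
Proof.
split=> h e e0.
  have s0 : 0 < Num.sqrt e by rewrite sqrtr_gt0.
  have [v [Mv hv]] := h _ s0; exists v; split => //.
  by move: hv; rewrite hnorm_lt // sqr_sqrtr // ltW.
have [v [Mv hv]] := h (e ^+ 2) (exprn_gt0 _ e0); exists v; split => //.
by rewrite hnorm_lt.
Qed.

Lemma cl_sub (M : H -> Prop) x : M x -> hclosure ip M x.
Proof. by move=> Mx; apply/clN => e e0; exists x; rewrite subrr N0. Qed.

Lemma cl_mono (M M' : H -> Prop) x : (forall y, M y -> M' y) -> hclosure ip M x -> hclosure ip M' x.
Proof. by move=> h /clN hx; apply/clN => e /hx [v [/h ? ?]]; exists v. Qed.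

Lemma cl_cl (M : H -> Prop) x : hclosure ip (hclosure ip M) x -> hclosure ip M x.
Proof.
move=> /clN hx; apply/clN => e e0.
have e4 : 0 < e / 4 by rewrite divr_gt0.
have [v [/clN Mv hv]] := hx _ e4; have [w [Mw hw]] := Mv _ e4.
exists w; split => //.
have -> : x - w = (x - v) + (v - w) by rewrite addrA subrK.
apply: le_lt_trans (N_tri _ _) _; lra.
Qed.

Lemma lin0 T : linT T -> T 0 = 0.
Proof.
move=> hT; have := hT 1 0 0; rewrite scaler0 addr0 scale1r => /eqP.
by rewrite -{1}[T 0]addr0 eq_sym => /eqP /addrI.
Qed.

Lemma linB T : linT T -> forall x y, T (x - y) = T x - T y.
Proof.
move=> hT x y; have := hT (-1) y x; rewrite !scaleN1r addrC => ->.
by rewrite addrC.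
Qed.

Lemma linN T : linT T -> forall x, T (- x) = - T x.
Proof. by move=> hT x; rewrite -sub0r linB // lin0 // sub0r. Qed.

Lemma NZle (a : H) (c : R[i]) : N (c *: a) = ((RE c)^+2 + (IM c)^+2) * N a.
Proof. exact: NZ. Qed.

Lemma cl_lin (M : H -> Prop) a x y :
  (forall a u v, M u -> M v -> M (a *: u + v)) ->
  hclosure ip M x -> hclosure ip M y -> hclosure ip M (a *: x + y).
Proof.
move=> hM /clN hx /clN hy; apply/clN => e e0.
set k := (RE a)^+2 + (IM a)^+2.
have k0 : 0 <= k by rewrite /k addr_ge0 // sqr_ge0.
have e1 : 0 < e / (4 * (k + 1)) by rewrite divr_gt0 // mulr_gt0 //; lra.
have e4 : 0 < e / 4 by rewrite divr_gt0.
have [u [Mu hu]] := hx _ e1; have [v [Mv hv]] := hy _ e4.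
exists (a *: u + v); split; first exact: hM.
have -> : a *: x + y - (a *: u + v) = a *: (x - u) + (y - v).
  by rewrite scalerBr opprD !addrA; congr (_ - _); rewrite addrAC.
apply: le_lt_trans (N_tri _ _) _; rewrite NZ -/k.
have : k * N (x - u) <= e / 4.
  move: hu; rewrite ltr_pdivlMr ?mulr_gt0 //; try lra.
  have := N_ge0 (x - u); move=> h1 h2.
  rewrite ler_pdivlMr //; nra.
lra.
Qed.

Lemma N_blin (P : H -> H) B : (forall x, hnorm ip (P x) <= B * hnorm ip x) ->
  forall x, N (P x) <= B ^+ 2 * N x.
Proof.
move=> hB x; have := hB x; rewrite !hnormE => h.
have h0 := sqrtr_ge0 (N (P x)).
rewrite -(sqr_sqrtr (N_ge0 (P x))) -(sqr_sqrtr (N_ge0 x)).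
have h1 := sqrtr_ge0 (N x).
rewrite -exprMn; nra.
Qed.

Lemma cl_map (M M' : H -> Prop) T x : blin T -> (forall v, M v -> M' (T v)) ->
  hclosure ip M x -> hclosure ip M' (T x).
Proof.
move=> [lT [B hB]] hM /clN hx; apply/clN => e e0.
have b0 : 0 < `|B| + 1 by rewrite ltr_wpDl.
have [v [Mv hv]] := hx (e / (`|B| + 1)) (divr_gt0 e0 b0).
exists (T v); split; first exact: hM.
rewrite -linB //; apply: le_lt_trans (hB _) _.
have := N_ge0 (x - v); have := ler_norm B; move: hv; rewrite ltr_pdivlMr // => h1 h2 h3.
nra.
Qed.

Lemma eq_closed T1 T2 : blin T1 -> blin T2 -> closedS (fun x => T1 x = T2 x).
Proof.
move=> [l1 [B1 h1]] [l2 [B2 h2]] x /clN hx.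
apply/eqP; rewrite -subr_eq0; apply/eqP/N_eq0.
apply/eqP; rewrite eq_le N_ge0 andbT.
apply: (@le0_eps _ (2 * (`|B1| + `|B2|))); first by rewrite mulr_ge0 // addr_ge0.
move=> e e0; have [v [hv hN]] := hx e e0.
have -> : T1 x - T2 x = T1 (x - v) - T2 (x - v) by rewrite (linB l1) (linB l2) hv opprB addrA subrK.
apply: le_trans (N_tri _ _) _; rewrite NN.
have := h1 (x - v); have := h2 (x - v).
have := ler_wpM2r (N_ge0 (x - v)) (ler_norm B1).
have := ler_wpM2r (N_ge0 (x - v)) (ler_norm B2).
have := ler_wpM2l (normr_ge0 B1) (ltW hN).
have := ler_wpM2l (normr_ge0 B2) (ltW hN).
lra.
Qed.

End Basics.



Section Proj.
Variables (R : realType) (H : lmodType R[i]) (ip : H -> H -> R[i]).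
Hypothesis hI : ipax ip.
Hypothesis hcomp : forall u : nat -> H,
         (forall e : R, 0 < e -> exists N : nat, forall m n : nat,
              (N <= m)%N -> (N <= n)%N -> hnorm ip (u m - u n) < e) ->
         exists l : H, forall e : R, 0 < e -> exists N : nat, forall n : nat,
              (N <= n)%N -> hnorm ip (u n - l) < e.

Local Notation N := (N ip).

Lemma quad0 (r n : R) : 0 <= n -> (forall s, 2 * s * r <= s ^+ 2 * n) -> r = 0.
Proof.
move=> n0 h; set s := r / (n + 1).
have hs : s * (n + 1) = r by rewrite /s mulfVK //; apply: lt0r_neq0; lra.
have h1 := h s.
have : r ^+ 2 * (n + 2) <= 0.
  have e : (n + 1) ^+ 2 * (2 * s * r) <= (n + 1) ^+ 2 * (s ^+ 2 * n).
    by apply: ler_wpM2l => //; rewrite sqr_ge0.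
  have -> : r ^+ 2 * (n + 2) = (n + 1) ^+ 2 * (2 * s * r) - (n + 1) ^+ 2 * (s ^+ 2 * n).
    by rewrite -hs; ring.
  lra.
move=> h2; apply/eqP; rewrite -sqrf_eq0 eq_le sqr_ge0 andbT.
have n2 : 0 < n + 2 by lra.
have := sqr_ge0 r; nra.
Qed.

Lemma inv_le (n K : nat) : (K <= n)%N -> (n.+1%:R : R)^-1 <= (K.+1%:R)^-1.
Proof. by move=> h; rewrite lef_pV2 ?posrE ?ltr0Sn // ler_nat. Qed.

Lemma N_addle a b (s : R) : 0 < s -> N (a + b) <= (1 + s) * N a + (1 + s^-1) * N b.
Proof.
move=> s0; rewrite NDE //.
have := N_ge0 hI (s%:C *: a - b); rewrite NBE // NZr // ReZl //.
set r := RE (ip a b) => h.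
have : 2 * r <= s * N a + s^-1 * N b.
  have t0 : 0 <= s^-1 by rewrite invr_ge0 ltW.
  have st : s * s^-1 = 1 by rewrite mulfV // lt0r_neq0.
  have := mulr_ge0 t0 h.
  have -> : s^-1 * (s ^+ 2 * N a - 2 * (s * r) + N b) = (s * s^-1) * (s * N a) - 2 * (s * s^-1) * r + s^-1 * N b by ring.
  rewrite st; lra.
lra.
Qed.

Variable M : H -> Prop.
Hypotheses (sM : subsp M) (cM : closedS ip M).

Lemma proj_ex x : exists m, M m /\ forall v, M v -> ip (x - m) v = 0.
Proof.
case: sM => M0 Mlin.
pose D : set R := fun r => exists m, M m /\ r = N (x - m).
have hD : has_inf D.
  split; first by exists (N (x - 0)); exists 0.
  by exists 0 => r [m [_ ->]]; exact: N_ge0.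
set d := inf D.
have dle : forall m, M m -> d <= N (x - m).
  by move=> m Mm; apply: (ge_inf hD.2); exists m.
have d0 : 0 <= d by apply: lb_le_inf => //; [exact: hD.1| move=> r [m [_ ->]]; exact: N_ge0].
pose P n m := M m /\ N (x - m) < d + (n.+1%:R)^-1.
have Pex : forall n, exists m, P n m.
  move=> n; have i0 : 0 < (n.+1%:R : R)^-1 by rewrite invr_gt0 ltr0Sn.
  have [r [m [Mm ->]] hr] := inf_adherent i0 hD.
  by exists m.
pose u n := epsilon (inhabits 0) (P n).
have hu : forall n, P n (u n) by move=> n; exact: (epsilon_spec _ _ (Pex n)).
have half : (2^-1 : R[i]) + 2^-1 = 1 by field.
have cauchy : forall n m, N (u m - u n) <= 2 * (n.+1%:R)^-1 + 2 * (m.+1%:R)^-1.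
  move=> n m.
  set mid := (2^-1 : R[i]) *: u n + ((2^-1 : R[i]) *: u m + 0).
  have Mmid : M mid by apply: (Mlin _ _ _ (hu n).1); apply: (Mlin _ _ _ (hu m).1 M0).
  have := N_par hI (x - u n) (x - u m).
  have -> : x - u n + (x - u m) = (x - mid) + (x - mid).
    have hm : mid + mid = u n + u m by rewrite /mid addr0 addrACA -!scalerDl half !scale1r.
    have e1 : forall a b c d : H, (a - b) + (c - d) = (a + c) - (b + d) by move=> *; rewrite opprD addrACA.
    by rewrite e1 (e1 x mid x mid) hm.
  have -> : x - u n - (x - u m) = u m - u n by rewrite opprD opprK addrACA subrr add0r addrC.
  rewrite NDE // -/(N (x - mid)).
  have := dle _ Mmid; have := (hu n).2; have := (hu m).2.
  have /= : RE (ip (x - mid) (x - mid)) = N (x - mid) by [].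
  set a1 := (n.+1%:R)^-1; set a2 := (m.+1%:R)^-1; lra.
have cs : forall e, 0 < e -> exists K, forall m n, (K <= m)%N -> (K <= n)%N -> hnorm ip (u m - u n) < e.
  move=> e e0; exists (Num.trunc (4 / e ^+ 2)) => m n hm hn.
  rewrite hnorm_lt //.
  have := truncnS_gt (4 / e ^+ 2); set K := Num.trunc _.
  have e2 : 0 < e ^+ 2 by rewrite exprn_gt0.
  move=> hK.
  have hK' : 4 * (K.+1%:R)^-1 < e ^+ 2.
    rewrite mulrC ltr_pdivrMl ?ltr0Sn //.
    by move: hK; rewrite ltr_pdivrMr // mulrC.
  have := inv_le hm; have := inv_le hn; have := cauchy n m.
  set a1 := (n.+1%:R)^-1; set a2 := (m.+1%:R)^-1; set a3 := (K.+1%:R)^-1.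
  have hK3 : 4 * a3 < e ^+ 2 by exact: hK'.
  lra.
have [l hl] := hcomp cs.
have Ml : M l.
  apply: cM => e e0; have [K hK] := hl e e0; exists (u K); split; first exact: (hu K).1.
  by rewrite hnormE -NN // opprB; exact: hK.
have Nl : N (x - l) <= d.
  rewrite -subr_le0; apply: (@le0_eps _ _ (d + 4)); first lra.
  move=> e e0; set q := Order.min e 1.
  have q0 : 0 < q by rewrite lt_min e0 ltr01.
  have q1 : q <= 1 by rewrite ge_min lexx orbT.
  have qe : q <= e by rewrite ge_min lexx.
  have q2 : 0 < q ^+ 2 by rewrite exprn_gt0.
  have [K1 hK1] := hl q q0.
  set K := maxn K1 (Num.trunc (q ^+ 2)^-1).
  have hK := hK1 K (leq_maxl _ _); rewrite hnorm_lt // in hK.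
  have hK2 : (K.+1%:R)^-1 < q ^+ 2.
    have := truncnS_gt (q ^+ 2)^-1; set T := Num.trunc _ => hT.
    apply: (@le_lt_trans _ _ (T.+1%:R)^-1); first exact: inv_le (leq_maxr _ _).
    rewrite -[X in _ < X]invrK ltf_pV2 ?posrE ?ltr0Sn ?invr_gt0 //.
  have hA := (hu K).2.
  have := N_addle (x - u K) (u K - l) q0.
  have -> : x - u K + (u K - l) = x - l by rewrite addrA subrK.
  set A := N (x - u K); set B := N (u K - l) => hN.
  have A0 : 0 <= A by exact: N_ge0.
  have B0 : 0 <= B by exact: N_ge0.
  have hA' : A <= d + q ^+ 2 by apply/ltW/(lt_trans hA); rewrite ltrD2l; exact: hK2.
  have h1 : (1 + q) * A <= (1 + q) * (d + q ^+ 2).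
    by apply: ler_wpM2l; lra.
  have h2 : (1 + q^-1) * B <= (1 + q^-1) * q ^+ 2.
    apply: ler_wpM2l; last lra.
    by rewrite addr_ge0 // ltW // invr_gt0.
  have h3 : (1 + q^-1) * q ^+ 2 = q ^+ 2 + q.
    by field; rewrite lt0r_neq0.
  have h4 : q ^+ 2 <= q by rewrite expr2 ler_piMl // ltW.
  have h5 : q ^+ 3 <= q by rewrite exprS; have := ler_wpM2l (ltW q0) (le_trans h4 q1); rewrite mulr1.
  have h6 : (d + 4) * q <= (d + 4) * e by apply: ler_wpM2l => //; lra.
  have h7 : (1 + q) * (d + q ^+ 2) = d + q * d + q ^+ 2 + q ^+ 3 by ring.
  have h8 : q * d <= q * d by [].
  nra.
exists l; split => // v Mv.
set r := x - l.
have key : forall w, M w -> RE (ip r w) = 0.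
  move=> w Mw; apply: (quad0 (N_ge0 hI w)) => s.
  have Mw' : M (s%:C *: w + l) by apply: (Mlin _ _ _ Mw Ml).
  have := dle _ Mw'.
  have -> : x - (s%:C *: w + l) = r + (- s)%:C *: w.
    by rewrite /r opprD addrA addrAC -scaleNr -rmorphN.
  rewrite NDE // NZr // ipZr // conjc_real (cReMr (- s) (ip r w)) sqrrN.
  move: Nl; rewrite -/r; lra.
apply: cplx0; first exact: key.
have Mi : M ('i *: v) by have := Mlin 'i v 0 Mv M0; rewrite addr0.
by rewrite -(cRe_ii (ip r v)) -ipZr //; apply: key.
Qed.

End Proj.



Section ProjSpec.
Variables (R : realType) (H : lmodType R[i]) (ip : H -> H -> R[i]).
Hypothesis hI : ipax ip.
Hypothesis hcomp : forall u : nat -> H,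
         (forall e : R, 0 < e -> exists N : nat, forall m n : nat,
              (N <= m)%N -> (N <= n)%N -> hnorm ip (u m - u n) < e) ->
         exists l : H, forall e : R, 0 < e -> exists N : nat, forall n : nat,
              (N <= n)%N -> hnorm ip (u n - l) < e.

Let ipC : forall x y : H, ip y x = conjc (ip x y).
Proof. by case: hI. Qed.
Let ipD : forall x : H, ip x x = 0 -> x = 0.
Proof. by case: hI. Qed.

Local Notation N := (N ip).

Definition isproj_on (Q : H -> H) (M : H -> Prop) :=
  is_projection ip Q /\ forall y, M y <-> prange Q y.

Definition orthv (x : H) (M : H -> Prop) := forall v, M v -> ip x v = 0.

Lemma ipC0 x y : ip x y = 0 -> ip y x = 0.
Proof. by move=> h; rewrite ipC h conjc0. Qed.

Lemma subBB (x a b : H) : (x - b) - (x - a) = a - b.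
Proof. by rewrite opprB addrC addrA subrK. Qed.

Section OneM.
Variable M : H -> Prop.
Hypotheses (sM : subsp M) (cM : closedS ip M).

Let M0 : M 0. Proof. by case: sM. Qed.
Let Mlin : forall a x y, M x -> M y -> M (a *: x + y). Proof. by case: sM. Qed.

Lemma MB x y : M x -> M y -> M (x - y).
Proof. by move=> hx hy; rewrite addrC -scaleN1r; apply: Mlin. Qed.

Lemma uniq_dec x m1 m2 : M m1 -> orthv (x - m1) M -> M m2 -> orthv (x - m2) M -> m1 = m2.
Proof.
move=> h1 o1 h2 o2; apply/eqP; rewrite -subr_eq0; apply/eqP/ipD.
have Md := MB h1 h2.
by rewrite -{1}(subBB x m1 m2) ipBl // o2 // o1 // subrr.
Qed.

Definition Pf x := epsilon (inhabits 0) (fun m => M m /\ orthv (x - m) M).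

Lemma Pf_spec x : M (Pf x) /\ orthv (x - Pf x) M.
Proof. by apply: (epsilon_spec _ (fun m => M m /\ orthv (x - m) M)); exact: proj_ex. Qed.

Lemma Pf_eq x m : M m -> orthv (x - m) M -> Pf x = m.
Proof. by move=> h o; have [h' o'] := Pf_spec x; exact: uniq_dec h' o' h o. Qed.

Lemma Pf_proj : isproj_on Pf M.
Proof.
split; first split.
- move=> a x y; apply: Pf_eq; first by apply: Mlin; apply: (Pf_spec _).1.
  move=> v Mv.
  have -> : a *: x + y - (a *: Pf x + Pf y) = a *: (x - Pf x) + (y - Pf y).
    by rewrite scalerBr opprD addrACA.
  by rewrite ipDl // ipZl // (Pf_spec x).2 // (Pf_spec y).2 // mulr0 addr0.
- exists 1 => x; rewrite mul1r !hnormE; apply: ler_wsqrtr.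
  have -> : N x = N (Pf x + (x - Pf x)) by rewrite addrC subrK.
  rewrite NDE // (ipC0 ((Pf_spec x).2 _ (Pf_spec x).1)) /=.
  have := N_ge0 hI (x - Pf x); lra.
- move=> x y.
  have e1 : ip (Pf x) y = ip (Pf x) (Pf y).
    have -> : y = Pf y + (y - Pf y) by rewrite addrC subrK.
    rewrite ipDr // (ipC0 ((Pf_spec y).2 _ (Pf_spec x).1)) addr0.
    by congr (ip _ _); rewrite addrC subrK.
  have e2 : ip x (Pf y) = ip (Pf x) (Pf y).
    have -> : x = Pf x + (x - Pf x) by rewrite addrC subrK.
    rewrite ipDl // ((Pf_spec x).2 _ (Pf_spec y).1) addr0.
    by congr (ip _ _); rewrite addrC subrK.
  by rewrite e1 e2.
- move=> x; apply: Pf_eq; first exact: (Pf_spec x).1.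
  by move=> v _; rewrite subrr ip0l.
- move=> y; split.
  + by move=> My; exists y; symmetry; apply: Pf_eq => // v _; rewrite subrr ip0l.
  + by case=> x ->; exact: (Pf_spec x).1.
Qed.

Lemma proj_onto_spec : isproj_on (proj_onto ip M) M.
Proof.
pose Pr := fun P : H -> H => is_projection ip P /\ forall y, M y <-> prange P y.
exact: (@epsilon_spec _ (inhabits (fun x : H => x)) Pr (ex_intro _ Pf Pf_proj)).
Qed.

End OneM.

Section AnyQ.
Variables (Q : H -> H) (M : H -> Prop).
Hypothesis hQ : isproj_on Q M.

Let QL : linT Q. Proof. by case: hQ => [[]]. Qed.
Let QS : forall x y, ip (Q x) y = ip x (Q y). Proof. by case: hQ => [[]]. Qed.
Let QI : forall x, Q (Q x) = Q x. Proof. by case: hQ => [[]]. Qed.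
Let QR : forall y, M y <-> prange Q y. Proof. by case: hQ. Qed.

Lemma projM x : M (Q x).
Proof. by apply/QR; exists x. Qed.

Lemma proj_fix y : M y -> Q y = y.
Proof. by move/QR => [z ->]; rewrite QI. Qed.

Lemma proj_orth x : orthv (x - Q x) M.
Proof.
move=> v /QR [z ->]; rewrite -QS (linB QL) QI subrr.
by rewrite ip0l.
Qed.

Lemma proj_zero x : Q x = 0 <-> orthv x M.
Proof.
split.
  move=> h v Mv; have := proj_orth x Mv; rewrite h subr0 //.
move=> h; apply: ipD; rewrite QS QI; apply: h; exact: projM.
Qed.

Lemma proj_blin : blin ip Q.
Proof.
split => //; case: hQ => [[_ [B hB] _ _] _]; exists (B ^+ 2).
exact: N_blin.
Qed.

Lemma proj_selfadj x y : ip (Q x) y = ip x (Q y).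
Proof. exact: QS. Qed.

Lemma proj_idem x : Q (Q x) = Q x.
Proof. exact: QI. Qed.

Lemma proj_lin : linT Q.
Proof. exact: QL. Qed.

End AnyQ.

Lemma range_closed (P : H -> H) : is_projection ip P ->
  subsp (prange P) /\ closedS ip (prange P).
Proof.
case=> PL [B hB] PS PI.
have hr : forall y, prange P y <-> P y = y.
  by move=> y; split; [case=> x ->; rewrite PI | move=> h; exists y].
split.
  split; first by apply/hr; rewrite (lin0 PL).
  by move=> a x y /hr hx /hr hy; apply/hr; rewrite PL hx hy.
move=> x hx; apply/hr.
have bP : blin ip P by split => //; exists (B ^+ 2); exact: N_blin.
have bI : blin ip (fun x => x).
  by split => //; exists 1 => z; rewrite mul1r.
apply: (eq_closed hI bP bI); apply: cl_mono hx => y /hr //.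
Qed.

End ProjSpec.



Section Main.
Variables (R : realType) (H : lmodType R[i]) (ip : H -> H -> R[i]).
Hypothesis hI : ipax ip.
Hypothesis hcomp : forall u : nat -> H,
         (forall e : R, 0 < e -> exists N : nat, forall m n : nat,
              (N <= m)%N -> (N <= n)%N -> hnorm ip (u m - u n) < e) ->
         exists l : H, forall e : R, 0 < e -> exists N : nat, forall n : nat,
              (N <= n)%N -> hnorm ip (u n - l) < e.
Variables (S : Type) (Gamma : S -> countType) (p : forall t, Gamma t -> H -> H).
Hypothesis hp : forall t a, is_projection ip (@p t a).
Hypothesis hsum : forall t, sums_to_identity ip p t.

Let ipC : forall x y : H, ip y x = conjc (ip x y).
Proof. by case: hI. Qed.
Let ipD : forall x : H, ip x x = 0 -> x = 0.
Proof. by case: hI. Qed.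

Local Notation N := (N ip).

Lemma isproj_blin P : is_projection ip P -> blin ip P.
Proof. by case=> PL [B hB] _ _; split => //; exists (B ^+ 2); exact: N_blin. Qed.

Lemma blin_comp T1 T2 : blin ip T1 -> blin ip T2 -> blin ip (fun x => T1 (T2 x)).
Proof.
move=> [l1 [B1 h1]] [l2 [B2 h2]]; split; first by move=> a x y; rewrite l2 l1.
exists (`|B1| * `|B2|) => x.
apply: (le_trans (h1 _)); apply: (@le_trans _ _ (`|B1| * N (T2 x))).
  by apply: ler_wpM2r; [exact: N_ge0 | exact: ler_norm].
rewrite -mulrA; apply: ler_wpM2l => //.
apply: (le_trans (h2 _)); apply: ler_wpM2r; [exact: N_ge0 | exact: ler_norm].
Qed.

Lemma blin_id : blin ip (fun x => x).
Proof. by split => //; exists 1 => z; rewrite mul1r. Qed.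

Lemma pop_proj i : is_projection ip (pop p i).
Proof. exact: hp. Qed.

Lemma prod_blin l : blin ip (prod_ops p l).
Proof.
elim: l => [|i l IH]; first exact: blin_id.
exact: (blin_comp (isproj_blin (pop_proj i)) IH).
Qed.

Lemma prod_cons i l x : prod_ops p (i :: l) x = pop p i (prod_ops p l x).
Proof. by []. Qed.

Lemma prod_app l1 l2 x : prod_ops p (l1 ++ l2)%list x = prod_ops p l1 (prod_ops p l2 x).
Proof. by elim: l1 => [|i l1 IH] //=; rewrite IH. Qed.

Lemma Hpi_sub : subsp (H_pi p).
Proof.
split.
  by move=> l1 l2 _; rewrite !(lin0 (prod_blin _).1).
move=> a x y hx hy l1 l2 hP.
by rewrite !(prod_blin _).1 (hx _ _ hP) (hy _ _ hP).
Qed.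

Lemma Hpi_closed : closedS ip (H_pi p).
Proof.
move=> x hx l1 l2 hP.
apply: (eq_closed hI (prod_blin l1) (prod_blin l2)).
by apply: cl_mono hx => y hy; apply: hy.
Qed.

Lemma ppi_spec : isproj_on ip (p_pi ip p) (H_pi p).
Proof. exact: (proj_onto_spec hI hcomp Hpi_sub Hpi_closed). Qed.

Lemma pop_Hpi i x : H_pi p x -> H_pi p (pop p i x).
Proof.
move=> hx l1 l2 hP.
have := hx (l1 ++ [:: i])%list (l2 ++ [:: i])%list (Permutation_app_tail _ hP).
by rewrite !prod_app.
Qed.

Lemma proj_eq (Q : H -> H) (M : H -> Prop) x m : subsp M -> isproj_on ip Q M ->
  M m -> orthv ip (x - m) M -> Q x = m.
Proof.
move=> sM hQ Mm om.
exact: (uniq_dec hI sM (projM hQ x) (proj_orth hI hQ x) Mm om).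
Qed.

Lemma ppi_comm i x : p_pi ip p (pop p i x) = pop p i (p_pi ip p x).
Proof.
have hP := ppi_spec; set P := p_pi ip p in hP *.
have [QL _ QS _] := pop_proj i.
apply: (proj_eq Hpi_sub hP); first exact/pop_Hpi/(projM hP).
move=> k hk; rewrite -(linB QL) QS; apply: (proj_orth hI hP).
exact: pop_Hpi.
Qed.

Lemma In_map_seq (T U : Type) (f : T -> U) (s : seq T) b :
  List.In b [seq f x | x <- s] <-> exists x, List.In x s /\ b = f x.
Proof.
elim: s => [|x s IH] /=; first by split => [[]|[? [[] _]]].
split.
  case=> h.
    by exists x; split; [left|].
  have [y [hy ->]] := proj1 IH h.
  by exists y; split; [right|].
case=> y [hy hb]; case: hy => [hy|hy].
  by left; rewrite hb hy.
by right; apply: (proj2 IH); exists y.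
Qed.

Lemma In_cat (T : Type) (s1 s2 : seq T) t : List.In t s1 -> List.In t (s1 ++ s2).
Proof. elim: s1 => [|x s1 IH] //= h; case: h => [->|h]; [by left | by right; apply: IH]. Qed.

Lemma In_cat2 (T : Type) (s1 s2 : seq T) t : List.In t s2 -> List.In t (s1 ++ s2).
Proof. by elim: s1 => [|x s1 IH] //= h; right; apply: IH. Qed.

Lemma prange_fix P y : is_projection ip P -> (prange P y <-> P y = y).
Proof. by case=> _ _ _ PI; split; [case=> x ->; rewrite PI | move=> h; exists y]. Qed.

Lemma inter_sub (ps : seq (H -> H)) : (forall P, List.In P ps -> is_projection ip P) ->
  subsp (fun y => forall P, List.In P ps -> prange P y) /\
  closedS ip (fun y => forall P, List.In P ps -> prange P y).
Proof.
move=> hps; split.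
  split; first by move=> P /hps /(range_closed hI) [[]].
  move=> a x y hx hy P hP; have [[_ hl] _] := range_closed hI (hps _ hP).
  by apply: hl; [apply: hx|apply: hy].
move=> x hx P hP; have [_ hc] := range_closed hI (hps _ hP); apply: hc.
by apply: cl_mono hx => y; apply.
Qed.

Definition Mw (om : forall t, Gamma t) (ts : seq S) (y : H) :=
  forall t, List.In t ts -> @p t (om t) y = y.

Lemma meet_Mw om ts y :
  (forall P, List.In P [seq @p t (om t) | t <- ts] -> prange P y) <-> Mw om ts y.
Proof.
split.
  by move=> h t ht; apply/prange_fix => //; apply: h; apply/In_map_seq; exists t.
by move=> h P /In_map_seq [t [ht ->]]; apply/prange_fix => //; apply: h.
Qed.

Lemma meet_zero om ts x :
  meet_proj ip [seq @p t (om t) | t <- ts] x = 0 <-> orthv ip x (Mw om ts).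
Proof.
have hps : forall P, List.In P [seq @p t (om t) | t <- ts] -> is_projection ip P.
  by move=> P /In_map_seq [t [_ ->]].
have [sM cM] := inter_sub hps.
have hQ := proj_onto_spec hI hcomp sM cM.
rewrite (proj_zero hI hQ); split => h v hv; apply: h; exact/meet_Mw.
Qed.

Variable A : (forall t, Gamma t) -> Prop.
Local Notation FA := (F_A ip p A).

Lemma FA_iff x : FA x <-> forall om, A om -> exists ts, ts <> [::] /\ orthv ip x (Mw om ts).
Proof.
split=> h om hom; have [ts [hts h2]] := h om hom; exists ts; split => //; exact/meet_zero.
Qed.

Lemma FA_lin a x y : FA x -> FA y -> FA (a *: x + y).
Proof.
move=> /FA_iff hx /FA_iff hy; apply/FA_iff => om hom.
have [ts1 [n1 o1]] := hx om hom; have [ts2 [n2 o2]] := hy om hom.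
exists (ts1 ++ ts2); split; first by case: ts1 n1 o1.
move=> v hv; rewrite ipDl // ipZl // o1 ?o2 ?mulr0 ?addr0 //.
  by move=> t ht; apply: hv; apply: In_cat2.
by move=> t ht; apply: hv; apply: In_cat.
Qed.

Lemma FA0 (s0 : S) : FA 0.
Proof. by apply/FA_iff => om _; exists [:: s0]; split => // v _; rewrite ip0l. Qed.

Lemma FA_P x : FA x -> FA (p_pi ip p x).
Proof.
move=> /FA_iff hx; apply/FA_iff => om hom.
have [ts [nts ox]] := hx om hom; exists ts; split => // v hv.
rewrite (proj_selfadj ppi_spec); apply: ox => t ht.
have := ppi_comm (existT _ t (om t)) v; rewrite /pop /= => <-.
by rewrite hv.
Qed.

Lemma ip_sum (I : Type) (s : seq I) (F : I -> H) x :
  ip (\sum_(c <- s) F c) x = \sum_(c <- s) ip (F c) x.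
Proof. by elim: s => [|c s IH]; rewrite ?big_nil ?big_cons ?ip0l // ipDl // IH. Qed.

Lemma cRe_sum (I : Type) (s : seq I) (F : I -> R[i]) :
  RE (\sum_(c <- s) F c) = \sum_(c <- s) RE (F c).
Proof. by elim: s => [|c s IH]; rewrite ?big_nil ?big_cons // cReD IH. Qed.

Lemma mut_orth t (a b : Gamma t) x : a != b -> @p t b x = x -> @p t a x = 0.
Proof.
move=> ab hb; apply: (N_eq0 hI).
have key : forall c : Gamma t, RE (ip (@p t c x) x) = N (@p t c x).
  move=> c; have [_ _ PS PI] := hp c.
  by rewrite -{1}(PI x) PS.
set y := @p t a x.
have Ny2 : N y ^+ 2 <= 0.
  apply: (le0_eps (N_ge0 hI x)) => e e0.
  have se : 0 < Num.sqrt e by rewrite sqrtr_gt0.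
  have [s0 hs0] := hsum t x se.
  set s := undup (a :: b :: s0).
  have us : uniq s := undup_uniq _.
  have ss : {subset s0 <= s} by move=> c hc; rewrite mem_undup !inE hc !orbT.
  have := hs0 s us ss; rewrite hnorm_lt // (sqr_sqrtr (ltW e0)) => hz.
  set z := x - \sum_(c <- s) @p t c x in hz.
  have CS := CS_Re hI z x.
  have Rz : RE (ip z x) = N x - \sum_(c <- s) N (@p t c x).
    rewrite /z ipBl // cReD cReN ip_sum cRe_sum; congr (_ - _).
    by apply: eq_bigr => c _; rewrite key.
  have sum_ge : N x + N y <= \sum_(c <- s) N (@p t c x).
    have bs : b \in s by rewrite mem_undup !inE eqxx orbT.
    rewrite (bigD1_seq b) //= hb -big_filter.
    have af : a \in [seq c <- s | c != b] by rewrite mem_filter ab mem_undup !inE eqxx.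
    rewrite (bigD1_seq a) ?filter_uniq //= lerD2l -/y -[leLHS]addr0 lerD2l.
    by apply: sumr_ge0 => c _; exact: N_ge0.
  have Ny0 := N_ge0 hI y.
  have hzx : N z * N x <= e * N x by apply: ler_wpM2r; [exact: N_ge0 | exact: ltW].
  rewrite mulrC.
  have : N y ^+ 2 <= RE (ip z x) ^+ 2.
    have hr : RE (ip z x) <= - N y by rewrite Rz; lra.
    move: hr; set rr := RE (ip z x) => hr; nra.
  lra.
by apply/eqP; rewrite -sqrf_eq0 eq_le Ny2 sqr_ge0.
Qed.

Lemma prod_b (b : pidx Gamma -> bool) l m :
  (forall i, List.In i l -> pop p i m = if b i then m else 0) ->
  prod_ops p l m = if all b l then m else 0.
Proof.
elim: l => [|i l IH] h //=.
rewrite IH; last by move=> j hj; apply: h; right.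
case: (all b l); first by rewrite andbT; apply: h; left.
by rewrite andbF (lin0 (isproj_blin (pop_proj i)).1).
Qed.

Lemma perm_all (b : pidx Gamma -> bool) l1 l2 : Permutation l1 l2 -> all b l1 = all b l2.
Proof.
elim=> //= [x l l' _ -> //| x y l | l l' l'' _ h1 _ h2]; first by rewrite andbCA.
by rewrite h1 h2.
Qed.

Lemma Mw_E om l1 l2 m : Permutation l1 l2 -> Mw om [seq projT1 i | i <- l1] m ->
  prod_ops p l1 m = prod_ops p l2 m.
Proof.
move=> hP hm.
pose b := fun i : pidx Gamma => projT2 i == om (projT1 i).
have h1 : forall i, List.In i l1 -> pop p i m = if b i then m else 0.
  case=> t a hi; rewrite /b /pop /=.
  have ht : @p t (om t) m = m.
    by apply: hm; apply/In_map_seq; exists (existT _ t a).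
  case: eqP => [-> //|/eqP ne]; exact: mut_orth ne ht.
have h2 : forall i, List.In i l2 -> pop p i m = if b i then m else 0.
  by move=> i hi; apply: h1; apply: Permutation_in (Permutation_sym hP) hi.
by rewrite (prod_b h1) (prod_b h2) (perm_all b hP).
Qed.

Lemma Kperp psi : orthv ip psi (H_pi p) -> psi = 0 \/ hclosure ip FA psi.
Proof.
move=> hpsi.
case: (classic (inhabited S)) => [[s0]|nS]; last first.
  left; apply: ipD; apply: hpsi => l1 l2 hP.
  case: l1 hP => [|[t a] l1] hP; last by exfalso; apply: nS; constructor.
  by rewrite (Permutation_nil hP).
right.
have sC : subsp (hclosure ip FA).
  split; first exact: (@cl_sub _ _ _ hI _ _ (FA0 s0)).
  move=> a x y hx hy; apply: (@cl_lin _ _ _ hI _ a x y _ hx hy) => a' u v; exact: FA_lin.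
have cC : closedS ip (hclosure ip FA) by move=> x hx; exact: (@cl_cl _ _ _ hI _ x hx).
have hQ := proj_onto_spec hI hcomp sC cC.
set Q := proj_onto ip _ in hQ.
set h := psi - Q psi.
have oh : orthv ip h (hclosure ip FA) := proj_orth hI hQ psi.
have hK : H_pi p h.
  move=> l1 l2 hP.
  case: l1 hP => [|i l1'] hP; first by rewrite (Permutation_nil hP).
  set l1 := i :: l1' in hP *.
  have bl1 := prod_blin l1; have bl2 := prod_blin l2.
  have sE : subsp (fun y => prod_ops p l1 y = prod_ops p l2 y).
    split; first by rewrite (lin0 bl1.1) (lin0 bl2.1).
    by move=> a x y hx hy; rewrite bl1.1 bl2.1 hx hy.
  have cE := eq_closed hI bl1 bl2.
  have hQE := proj_onto_spec hI hcomp sE cE.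
  set QE := proj_onto ip _ in hQE.
  set r := h - QE h.
  have or : orthv ip r (fun y => prod_ops p l1 y = prod_ops p l2 y) := proj_orth hI hQE h.
  have rFA : FA r.
    apply/FA_iff => om _; exists [seq projT1 i | i <- l1]; split => // v hv.
    by apply: or; exact: Mw_E hP hv.
  have hr0 : ip h r = 0 := oh r (@cl_sub _ _ _ hI _ _ rFA).
  have hq0 : ip (QE h) r = 0 := ipC0 hI (or _ (projM hQE h)).
  have r0 : r = 0 by apply: ipD; rewrite {1}/r ipBl // hr0 hq0 subrr.
  have -> : h = QE h by apply/eqP; rewrite -subr_eq0 -/r r0.
  exact: (projM hQE h).
have h0 : h = 0.
  apply: ipD; rewrite {1}/h ipBl // (hpsi _ hK) (ipC0 hI (oh _ (projM hQ psi))) subrr //.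
have -> : psi = Q psi by apply/eqP; rewrite -subr_eq0 -/h h0.
exact: (projM hQ psi).
Qed.

End Main.

Unset Implicit Arguments.
Set Strict Implicit.
Local Close Scope complex_scope.

Theorem lemma2 (R : realType) (H : lmodType R[i]) (ip : H -> H -> R[i])
  (hH : hilbert_space ip)
  (S : Type) (Gamma : S -> countType) (p : forall t, Gamma t -> H -> H)
  (hp : forall t a, is_projection ip (p t a))
  (hsum : forall t, sums_to_identity ip p t)
  (A : (forall t, Gamma t) -> Prop) :
  let FA := F_A ip p A in
  let FApi := capset FA (H_pi p) in
  (forall phi, hclosure ip FA phi <-> hclosure ip FApi (p_pi ip p phi)) /\
  (forall phi, hclosure ip FA phi <-> sumset (hclosure ip FApi) (horth ip (H_pi p)) phi) /\
  (forall phi, horth ip FA phi <-> capset (horth ip FApi) (H_pi p) phi) /\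
  (forall phi, capset (hclosure ip FA) (H_pi p) phi <-> hclosure ip FApi phi).
Proof.
case: hH => ipL ipC ipP ipD hcomp.
have hI : ipax ip by split.
move=> FA FApi.
set K := H_pi p.
set P := p_pi ip p.
have hP : isproj_on ip P K := ppi_spec hI hcomp hp.
have PK : forall x, K (P x) := projM hP.
have Pfix : forall y, K y -> P y = y := proj_fix hP.
have Porth : forall x, orthv ip (x - P x) K := proj_orth hI hP.
have PB : blin ip P := proj_blin hI hP.
have FAP : forall x, FA x -> FA (P x) := fun x hx => FA_P hI hcomp hp hx.
have FAlin : forall a x y, FA x -> FA y -> FA (a *: x + y) := fun a x y hx hy => FA_lin hI hcomp hp a hx hy.
have Kp : forall psi, orthv ip psi K -> psi = 0 \/ hclosure ip FA psi := fun psi h => Kperp hI hcomp hp hsum A h.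
have Kc : closedS ip K := Hpi_closed hI hp.
have cl_add : forall x y, hclosure ip FA x -> hclosure ip FA y -> hclosure ip FA (x + y).
  move=> x y hx hy; have := @cl_lin _ _ _ hI _ 1 x y FAlin hx hy; by rewrite scale1r.
have c1 : forall x, hclosure ip FApi x -> hclosure ip FA x.
  by move=> x; apply: cl_mono => y [].
have c2 : forall x, hclosure ip FApi x -> K x.
  by move=> x hx; apply: Kc; apply: cl_mono hx => y [].
have c3 : forall x, hclosure ip FA x -> hclosure ip FApi (P x).
  move=> x hx; apply: (@cl_map _ _ _ hI FA FApi P x PB _ hx).
  by move=> v hv; split; [exact: FAP | exact: PK].
have dec : forall x, x = P x + (x - P x) by move=> x; rewrite addrC subrK.
have partA : forall phi, hclosure ip FA phi <-> hclosure ip FApi (P phi).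
  move=> phi; split; first exact: c3.
  move=> h; case: (Kp _ (Porth phi)) => [w0|hw].
    by rewrite (dec phi) w0 addr0; exact: c1.
  by rewrite (dec phi); apply: cl_add => //; exact: c1.
split; first exact: partA.
split.
  move=> phi; split.
    move=> h; exists (P phi), (phi - P phi); split; first exact/partA.
    by split; [exact: Porth | exact: dec].
  case=> v [w [hv [hw ->]]]; case: (Kp _ hw) => [->|hw'].
    by rewrite addr0; exact: c1.
  by apply: cl_add => //; exact: c1.
split.
  move=> phi; split.
    move=> hphi; split; first by move=> v [hv _]; exact: hphi.
    set w := phi - P phi.
    have e1 : ip phi w = 0.
      case: (Kp w (Porth phi)) => [->|/clN hw]; first by rewrite ip0r.
      apply: (small_ip hI) => e e0; have [v [hv hN]] := hw e e0.
      by exists v; split => //; apply: hphi.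
    have e2 : ip (P phi) w = 0 := ipC0 hI (Porth phi _ (PK phi)).
    have w0 : w = 0 by apply: ipD; rewrite {1}/w ipBl // e1 e2 subrr.
    have -> : phi = P phi by apply/eqP; rewrite -subr_eq0 -/w w0.
    exact: PK.
  case=> hphi Kphi v hv.
  rewrite -(Pfix _ Kphi) (proj_selfadj hP); apply: hphi; split; [exact: FAP | exact: PK].
move=> phi; split.
  by case=> h Kphi; rewrite -(Pfix _ Kphi); exact: c3.
by move=> h; split; [exact: c1 | exact: c2].
Qed.
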